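(* Let $(\mathbb{X},\dagger)$ be a dagger additive category and let $\begin{bmatrix}\alpha&\beta\\ \beta^\dagger&\delta\end{bmatrix}:B\oplus C\to B\oplus C$ be a $\dagger$-positive map such that there is a map $\begin{bmatrix}\phi&\psi\end{bmatrix}:B\oplus C\to D$ with $\begin{bmatrix}\alpha&\beta\\ \beta^\dagger&\delta\end{bmatrix}=\begin{bmatrix}\phi&\psi\end{bmatrix}^\dagger\circ\begin{bmatrix}\phi&\psi\end{bmatrix}$ for which $\phi:B\to D$ has an [MP.1,3]-inverse $\phi^\bullet:D\to B$. Then $m=\psi^\dagger\circ(\phi^\bullet)^\dagger$ is a conditional generator of $\begin{bmatrix}\alpha&\beta\\ \beta^\dagger&\delta\end{bmatrix}$.
   Context: A dagger additive category is a dagger category (contravariant identity-on-objects involutive functor $\dagger$) whose hom-sets are abelian groups with bilinear composition and additive $\dagger$, having a zero object and finite biproducts whose projections $\pi_j$ and injections $\iota_j$ satisfy $\pi_j^\dagger=\iota_j$. Maps between biproducts are written as matrices; composition is matrix multiplication and $\dagger$ is transpose with entrywise $\dagger$. An endomorphism $p$ is $\dagger$-positive if $p=\chi^\dagger\circ\chi$ for some map $\chi$. An [MP.1,3]-inverse of $f:A\to B$ is a map $f^\bullet:B\to A$ with $f\circ f^\bullet\circ f=f$ and $(f\circ f^\bullet)^\dagger=f\circ f^\bullet$. A conditional generator for a $\dagger$-positive map $\begin{bmatrix}\alpha&\beta\\ \beta^\dagger&\delta\end{bmatrix}:B\oplus C\to B\oplus C$ (with $\alpha:B\to B$, $\beta:C\to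 B$, $\delta:C\to C$) is a map $m:B\to C$ with (i) $m\circ\alpha=\beta^\dagger$ and (ii) $\delta-m\circ\beta$ is $\dagger$-positive. *)

(* Defs.v *)
From HB Require Import structures.
From mathcomp Require Import all_boot all_algebra.
Set Implicit Arguments. Unset Strict Implicit. Unset Printing Implicit Defensive.
Import GRing.Theory.
Local Open Scope ring_scope.

(* A dagger additive category, with a chosen zero object and chosen binary
   biproducts (binary biproducts + zero object = all finite biproducts). *)
Record DaggerAdditiveCat := {
  Ob : Type;
  Mor : Ob -> Ob -> zmodType;
  mcomp : forall A B C : Ob, Mor B C -> Mor A B -> Mor A C;
  idm : forall A : Ob, Mor A A;
  dag : forall A B : Ob, Mor A B -> Mor B A;
  comp_assoc : forall A B C E (h : Mor C E) (g : Mor B C) (f : Mor A B),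
      mcomp h (mcomp g f) = mcomp (mcomp h g) f;
  comp_id_l : forall A B (f : Mor A B), mcomp (idm B) f = f;
  comp_id_r : forall A B (f : Mor A B), mcomp f (idm A) = f;
  comp_addl : forall A B C (g g' : Mor B C) (f : Mor A B),
      mcomp (g + g') f = mcomp g f + mcomp g' f;
  comp_addr : forall A B C (g : Mor B C) (f f' : Mor A B),
      mcomp g (f + f') = mcomp g f + mcomp g f';
  dag_comp : forall A B C (g : Mor B C) (f : Mor A B),
      dag (mcomp g f) = mcomp (dag f) (dag g);
  dag_id : forall A, dag (idm A) = idm A;
  dag_invol : forall A B (f : Mor A B), dag (dag f) = f;
  dag_add : forall A B (f g : Mor A B), dag (f + g) = dag f + dag g;
  zob : Ob;
  zob_init : forall A (f : Mor zob A), f = 0;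
  zob_term : forall A (f : Mor A zob), f = 0;
  bip : Ob -> Ob -> Ob;
  pi1 : forall A B, Mor (bip A B) A;
  pi2 : forall A B, Mor (bip A B) B;
  io1 : forall A B, Mor A (bip A B);
  io2 : forall A B, Mor B (bip A B);
  pi1_io1 : forall A B, mcomp (pi1 A B) (io1 A B) = idm A;
  pi2_io2 : forall A B, mcomp (pi2 A B) (io2 A B) = idm B;
  pi1_io2 : forall A B, mcomp (pi1 A B) (io2 A B) = 0;
  pi2_io1 : forall A B, mcomp (pi2 A B) (io1 A B) = 0;
  io_pi_sum : forall A B,
      mcomp (io1 A B) (pi1 A B) + mcomp (io2 A B) (pi2 A B) = idm (bip A B);
  dag_pi1 : forall A B, dag (pi1 A B) = io1 A B;
  dag_pi2 : forall A B, dag (pi2 A B) = io2 A B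
}.

Arguments Mor : clear implicits.
Arguments mcomp {d A B C}.
Arguments idm {d}.
Arguments dag {d A B}.
Arguments bip {d}.
Arguments pi1 {d A B}.
Arguments pi2 {d A B}.
Arguments io1 {d A B}.
Arguments io2 {d A B}.

Section Defs.
Variable X : DaggerAdditiveCat.

(* 2x2 matrix [a b; c e] : A (+) B -> A' (+) B'  *)
Definition mat22 (A B A' B' : Ob X) (a : Mor X A A') (b : Mor X B A')
    (c : Mor X A B') (e : Mor X B B') : Mor X (bip A B) (bip A' B') :=
  mcomp io1 (mcomp a pi1) + mcomp io1 (mcomp b pi2)
  + mcomp io2 (mcomp c pi1) + mcomp io2 (mcomp e pi2).

Definition row2 (A B E : Ob X) (f : Mor X A E) (g : Mor X B E)
    : Mor X (bip A B) E :=
  mcomp f pi1 + mcomp g pi2.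

Definition dag_positive (A : Ob X) (p : Mor X A A) : Prop :=
  exists (E : Ob X) (chi : Mor X A E), p = mcomp (dag chi) chi.

Definition MP13_inverse (A B : Ob X) (f : Mor X A B) (fb : Mor X B A) : Prop :=
  mcomp f (mcomp fb f) = f /\ dag (mcomp f fb) = mcomp f fb.

Definition conditional_generator (B C : Ob X) (alpha : Mor X B B)
    (beta : Mor X C B) (delta : Mor X C C) (m : Mor X B C) : Prop :=
  mcomp m alpha = dag beta /\ dag_positive (delta - mcomp m beta).

End Defs.

(* Main.v *)
Require Import Defs.
From mathcomp Require Import all_boot all_algebra.
Import GRing.Theory.
Local Open Scope ring_scope.

Section H.
Variable X : DaggerAdditiveCat.

Lemma c0r (A B C : Ob X) (g : Mor X B C) : mcomp g (0 : Mor X A B) = 0.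
Proof.
have h := comp_addr g (0 : Mor X A B) 0. rewrite addr0 in h.
have: mcomp g 0 + 0 = mcomp g 0 + mcomp g (0 : Mor X A B) by rewrite addr0.
by move/addrI => <-.
Qed.
Lemma c0l (A B C : Ob X) (f : Mor X A B) : mcomp (0 : Mor X B C) f = 0.
Proof.
have h := comp_addl (0 : Mor X B C) 0 f. rewrite addr0 in h.
have: mcomp 0 f + 0 = mcomp 0 f + mcomp (0 : Mor X B C) f by rewrite addr0.
by move/addrI => <-.
Qed.
Lemma cNr (A B C : Ob X) (g : Mor X B C) (f : Mor X A B) : mcomp g (- f) = - mcomp g f.
Proof.
apply/eqP; rewrite -subr_eq0 opprK -comp_addr addrC subrr c0r //.
Qed.
Lemma cNl (A B C : Ob X) (g : Mor X B C) (f : Mor X A B) : mcomp (- g) f = - mcomp g f.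
Proof.
apply/eqP; rewrite -subr_eq0 opprK -comp_addl addrC subrr c0l //.
Qed.
Lemma dN (A B : Ob X) (f : Mor X A B) : dag (- f) = - dag f.
Proof.
apply/eqP; rewrite -subr_eq0 opprK -dag_add addrC subrr.
have h := dag_add (0 : Mor X A B) 0. rewrite addr0 in h.
have: dag (0 : Mor X A B) + 0 = dag 0 + dag (0 : Mor X A B) by rewrite addr0.
by move/addrI => <-.
Qed.
Lemma dio1 (A B : Ob X) : dag (@io1 X A B) = pi1.
Proof. by rewrite -dag_pi1 dag_invol. Qed.
Lemma dio2 (A B : Ob X) : dag (@io2 X A B) = pi2.
Proof. by rewrite -dag_pi2 dag_invol. Qed.

Lemma ext (A B A' B' : Ob X) a b c e :
  @mcomp X _ _ _ pi1 (mcomp (@mat22 X A B A' B' a b c e) io1) = a /\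
  @mcomp X _ _ _ pi1 (mcomp (@mat22 X A B A' B' a b c e) io2) = b /\
  @mcomp X _ _ _ pi2 (mcomp (@mat22 X A B A' B' a b c e) io2) = e.
Proof.
rewrite /mat22 !comp_addl !comp_addr -!comp_assoc.
rewrite !(comp_assoc _ pi1) !(comp_assoc _ pi2).
rewrite !(comp_assoc pi1) !(comp_assoc pi2) !(comp_assoc _ _ io1) !(comp_assoc _ _ io2).
rewrite !pi1_io1 !pi1_io2 !pi2_io1 !pi2_io2 ?c0l ?c0r ?comp_id_l ?comp_id_r.
rewrite -!comp_assoc !pi1_io1 !pi1_io2 !pi2_io1 !pi2_io2.
by rewrite ?(c0l, c0r, addr0, add0r, comp_id_l, comp_id_r).
Qed.

Lemma extr (A B E : Ob X) (f : Mor X A E) (g : Mor X B E) :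
  mcomp (row2 f g) io1 = f /\ mcomp (row2 f g) io2 = g.
Proof.
rewrite /row2 !comp_addl -!comp_assoc !pi1_io1 !pi1_io2 !pi2_io1 !pi2_io2.
by rewrite !c0r !comp_id_r addr0 add0r.
Qed.
End H.

Theorem mainTheorem12 (X : DaggerAdditiveCat) (B C D : Ob X)
    (alpha : Mor X B B) (beta : Mor X C B) (delta : Mor X C C)
    (phi : Mor X B D) (psi : Mor X C D) (phib : Mor X D B) :
  dag_positive (mat22 alpha beta (dag beta) delta) ->
  mat22 alpha beta (dag beta) delta
    = mcomp (dag (row2 phi psi)) (row2 phi psi) ->
  MP13_inverse phi phib ->
  conditional_generator alpha beta delta (mcomp (dag psi) (dag phib)).
Proof.
move=> _ hM [h1 h3].
have [ea [eb ed]] := @ext X _ _ _ _ alpha beta (dag beta) delta.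
have [r1 r2] := @extr X _ _ _ phi psi.
have gen : forall (U V : Ob X) (u : Mor X _ U) (v : Mor X V _),
    mcomp u (mcomp (mcomp (dag (row2 phi psi)) (row2 phi psi)) v)
    = mcomp (dag (mcomp (row2 phi psi) (dag u))) (mcomp (row2 phi psi) v).
  by move=> U V u v; rewrite dag_comp dag_invol !comp_assoc.
rewrite hM gen dag_pi1 r1 in ea.
rewrite hM gen dag_pi1 r1 r2 in eb.
rewrite hM gen dag_pi2 r2 in ed.
subst alpha beta delta.
split.
  rewrite dag_comp dag_invol -!comp_assoc (comp_assoc (dag phib)) -dag_comp h3.
  by rewrite -comp_assoc h1.
set P := mcomp phi phib.
have PP : mcomp P P = P by rewrite /P comp_assoc -(comp_assoc phi phib phi) h1.
have -> : mcomp (mcomp (dag psi) (dag phib)) (mcomp (dag phi) psi)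
    = mcomp (dag psi) (mcomp P psi).
  by rewrite comp_assoc -(comp_assoc (dag psi) (dag phib)) -dag_comp -/P h3 !comp_assoc.
exists D, (psi - mcomp P psi).
rewrite dag_add dN comp_addl !comp_addr cNl !cNr dag_comp h3.
rewrite -/P cNl opprK (comp_assoc (mcomp (dag psi) P) P psi) -(comp_assoc (dag psi) P P) PP.
by rewrite (addNr (mcomp (mcomp (dag psi) P) psi)) addr0.
Qed.
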